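(* Let $G$ be a graph satisfying the triangle condition at every vertex. Then $G$ is an swm-graph if and only if for every pair of vertices $p,q$ the interval $I(p,q)$, endowed with the base-point order $\preceq_p$, is a modular lattice, and the subgraph of $G$ induced by $I(p,q)$ is the covering graph of this lattice and is an isometric subgraph of $G$.
   Context: Graphs are simple, undirected, connected, possibly infinite; $d$ is graph distance, $I(p,q)=\{x:d(p,x)+d(x,q)=d(p,q)\}$. Triangle condition at $u$: for any $v,w$ with $1=d(v,w)<d(u,v)=d(u,w)$ there is a common neighbor $x$ of $v,w$ with $d(u,x)=d(u,v)-1$. Quadrangle condition at $u$: for $v,w,z$ with $d(v,z)=d(w,z)=1$, $2=d(v,w)\le d(u,v)=d(u,w)=d(u,z)-1$ there is a common neighbor $x$ of $v,w$ with $d(u,x)=d(u,v)-1$. Weakly modular: both conditions hold at every vertex. An swm-graph is a weakly modular graph containing no induced $K_4^-$ and no isometric $K_{3,3}^-$ ($K_4$, resp. $K_{3,3}$, minus one edge). The base-point order on $I(p,q)$ is $x\preceq_p y$ iff $x\in I(p,y)$. A lattice is modular if $x\vee(y\wedge z)=(x\vee y)\wedge z$ whenever $x\preceq z$. The covering graph of a poset has an edge between $x,y$ iff one covers the other. *)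

(* Defs.v *)
From Stdlib Require Import Arith Lia ClassicalEpsilon.

Set Implicit Arguments.

Section Graphs.
Variable V : Type.
Variable adj : V -> V -> Prop.

Inductive walk : nat -> V -> V -> Prop :=
| walk0 x : walk 0 x x
| walkS n x y z : adj x y -> walk n y z -> walk (S n) x z.

Definition is_dist (x y : V) (n : nat) : Prop :=
  walk n x y /\ forall m, walk m x y -> n <= m.

Definition simple_connected_graph : Prop :=
  (forall x y, adj x y -> adj y x) /\
  (forall x, ~ adj x x) /\
  (forall x y, exists n, walk n x y).

(* the graph distance d (meaningful for connected graphs) *)
Definition dist (x y : V) : nat := epsilon (inhabits 0) (fun n => is_dist x y n).

Definition interval (p q x : V) : Prop := dist p x + dist x q = dist p q.

Definition bp_le (p x y : V) : Prop := interval p y x.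

Definition triangle_cond (u : V) : Prop :=
  forall v w, adj v w -> dist u v = dist u w -> 1 < dist u v ->
    exists x, adj x v /\ adj x w /\ dist u x = dist u v - 1.

Definition quadrangle_cond (u : V) : Prop :=
  forall v w z, adj v z -> adj w z -> dist v w = 2 ->
    2 <= dist u v -> dist u v = dist u w -> dist u z = dist u v + 1 ->
    exists x, adj x v /\ adj x w /\ dist u x = dist u v - 1.

Definition weakly_modular : Prop :=
  forall u, triangle_cond u /\ quadrangle_cond u.

Definition has_induced_K4minus : Prop :=
  exists a b c d, a <> b /\ a <> c /\ a <> d /\ b <> c /\ b <> d /\ c <> d /\
    adj a b /\ adj a c /\ adj a d /\ adj b c /\ adj b d /\ ~ adj c d.

(* isometric K33^- : parts {a1,a2,a3}, {b1,b2,b3}, all edges ai-bj except a3-b3;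
   isometric means G-distances equal the distances in K33^-. *)
Definition has_isometric_K33minus : Prop :=
  exists a1 a2 a3 b1 b2 b3,
    dist a1 a2 = 2 /\ dist a1 a3 = 2 /\ dist a2 a3 = 2 /\
    dist b1 b2 = 2 /\ dist b1 b3 = 2 /\ dist b2 b3 = 2 /\
    dist a1 b1 = 1 /\ dist a1 b2 = 1 /\ dist a1 b3 = 1 /\
    dist a2 b1 = 1 /\ dist a2 b2 = 1 /\ dist a2 b3 = 1 /\
    dist a3 b1 = 1 /\ dist a3 b2 = 1 /\ dist a3 b3 = 3.

Definition swm_graph : Prop :=
  weakly_modular /\ ~ has_induced_K4minus /\ ~ has_isometric_K33minus.
End Graphs.

Section Lattices.
Variable V : Type.
Variables (S : V -> Prop) (le : V -> V -> Prop).

Definition is_poset : Prop :=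
  (forall x, S x -> le x x) /\
  (forall x y, S x -> S y -> le x y -> le y x -> x = y) /\
  (forall x y z, S x -> S y -> S z -> le x y -> le y z -> le x z).

Definition is_join (x y j : V) : Prop :=
  S j /\ le x j /\ le y j /\ forall u, S u -> le x u -> le y u -> le j u.

Definition is_meet (x y m : V) : Prop :=
  S m /\ le m x /\ le m y /\ forall u, S u -> le u x -> le u y -> le u m.

Definition is_lattice : Prop :=
  is_poset /\
  forall x y, S x -> S y -> (exists j, is_join x y j) /\ (exists m, is_meet x y m).

(* x \/ (y /\ z) = (x \/ y) /\ z whenever x <= z *)
Definition is_modular_lattice : Prop :=
  is_lattice /\
  forall x y z, S x -> S y -> S z -> le x z ->
    forall a b c e, is_meet y z a -> is_join x a b -> is_join x y c -> is_meet c z e ->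
      b = e.

Definition covers (x y : V) : Prop :=
  S x /\ S y /\ le x y /\ x <> y /\
  forall z, S z -> le x z -> le z y -> z = x \/ z = y.
End Lattices.

Definition induced (V : Type) (adj : V -> V -> Prop) (S : V -> Prop) : V -> V -> Prop :=
  fun x y => S x /\ S y /\ adj x y.

Definition is_covering_graph_on (V : Type) (adj : V -> V -> Prop) (S : V -> Prop)
  (le : V -> V -> Prop) : Prop :=
  forall x y, S x -> S y -> (adj x y <-> covers S le x y \/ covers S le y x).

Definition isometric_on (V : Type) (adj : V -> V -> Prop) (S : V -> Prop) : Prop :=
  forall x y, S x -> S y -> is_dist (induced adj S) x y (dist adj x y).

(* Main.v *)
Require Import Defs.
From Stdlib Require Import Arith Lia Classical ClassicalEpsilon.

Lemma ex_min (P : nat -> Prop) : (exists n, P n) -> exists n, P n /\ forall m, P m -> n <= m.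
Proof.
  intros [n Hn]. induction n as [n IH] using lt_wf_ind.
  destruct (classic (exists m, m < n /\ P m)) as [[m [Hm Pm]]|Hno].
  - exact (IH m Hm Pm).
  - exists n; split; auto. intros m Pm. destruct (le_lt_dec n m); auto.
    exfalso; apply Hno; eauto.
Qed.

Lemma bounded_max (P : nat -> Prop) B : (exists k, P k) -> (forall k, P k -> k <= B) ->
  exists n, P n /\ forall k, P k -> k <= n.
Proof.
  revert P. induction B as [|B IH]; intros P [k Hk] Hb.
  - exists 0. assert (k = 0) by (specialize (Hb k Hk); lia). subst. split; [exact Hk|].
    intros j Hj; specialize (Hb j Hj); lia.
  - destruct (classic (P (S B))) as [HS|HS].
    + exists (S B); split; auto.
    + apply IH; [eauto|]. intros j Hj. specialize (Hb j Hj).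
      destruct (Nat.eq_dec j (S B)); [subst; contradiction|lia].
Qed.

Section Metric.
Variable V : Type.
Variable adj : V -> V -> Prop.
Hypothesis hsym : forall x y, adj x y -> adj y x.
Hypothesis hirr : forall x, ~ adj x x.
Hypothesis hcon : forall x y, exists n, walk adj n x y.

Local Notation d := (dist adj).

Lemma walk_app n m x y z : walk adj n x y -> walk adj m y z -> walk adj (n + m) x z.
Proof. induction 1; intros; simpl; auto. econstructor; eauto. Qed.

Lemma walk_rev n x y : walk adj n x y -> walk adj n y x.
Proof.
  induction 1. constructor.
  replace (S n) with (n + 1) by lia. eapply walk_app; eauto.
  econstructor; eauto. constructor.
Qed.

Lemma dist_spec x y : is_dist adj x y (d x y).
Proof.
  unfold dist. apply epsilon_spec.
  destruct (ex_min (fun n => walk adj n x y) (hcon x y)) as [n [H1 H2]].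
  exists n; split; auto.
Qed.

Lemma d_walk x y : walk adj (d x y) x y.
Proof. apply dist_spec. Qed.

Lemma d_le n x y : walk adj n x y -> d x y <= n.
Proof. intros; apply dist_spec; auto. Qed.

Lemma d_refl x : d x x = 0.
Proof. pose proof (d_le 0 x x (walk0 adj x)); lia. Qed.

Lemma walk0_eq x y : walk adj 0 x y -> x = y.
Proof. intros H; inversion H; auto. Qed.

Lemma d_eq0 x y : d x y = 0 -> x = y.
Proof. intros H. pose proof (d_walk x y) as W. rewrite H in W. apply walk0_eq; auto. Qed.

Lemma d_sym x y : d x y = d y x.
Proof.
  pose proof (d_le _ _ _ (walk_rev _ _ _ (d_walk x y))).
  pose proof (d_le _ _ _ (walk_rev _ _ _ (d_walk y x))). lia.
Qed.

Lemma d_tri x y z : d x z <= d x y + d y z.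
Proof. apply d_le. apply walk_app with y; apply d_walk. Qed.

Lemma d_adj x y : adj x y -> d x y = 1.
Proof.
  intros H. assert (d x y <= 1).
  { apply d_le. econstructor; eauto. constructor. }
  destruct (d x y) eqn:E; [|lia]. apply d_eq0 in E; subst. exfalso; eapply hirr; eauto.
Qed.

Lemma d_one x y : d x y = 1 -> adj x y.
Proof.
  intros H. pose proof (d_walk x y) as W. rewrite H in W.
  inversion W as [|n a b c Hab Hw]; subst. apply walk0_eq in Hw; subst; auto.
Qed.

Lemma d_step x y n : d x y = S n -> exists z, adj x z /\ d z y = n.
Proof.
  intros H. pose proof (d_walk x y) as W. rewrite H in W.
  inversion W as [|m a b c Hab Hw]; subst. exists b; split; auto.
  pose proof (d_le _ _ _ Hw). pose proof (d_tri x b y). rewrite (d_adj _ _ Hab) in H1. lia.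
Qed.

Lemma d_lip u x y : adj x y -> d u x <= S (d u y).
Proof. intros H. pose proof (d_tri u y x). rewrite (d_adj y x (hsym _ _ H)) in H0. lia. Qed.

Lemma d_neq x y : d x y <> 0 -> x <> y.
Proof. intros H E; subst; apply H, d_refl. Qed.

Definition le p x y := d p x + d x y = d p y.

Lemma le_refl p x : le p x x.
Proof. unfold le; rewrite d_refl; lia. Qed.

Lemma le_bot p x : le p p x.
Proof. unfold le; rewrite d_refl; lia. Qed.

Lemma le_dist p x y : le p x y -> d x y = d p y - d p x.
Proof. unfold le; lia. Qed.

Lemma le_rank p x y : le p x y -> d p x <= d p y.
Proof. unfold le; lia. Qed.

Lemma le_eq p x y : le p x y -> d p x = d p y -> x = y.
Proof. unfold le; intros; apply d_eq0; lia. Qed.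

Lemma le_antisym p x y : le p x y -> le p y x -> x = y.
Proof. intros H1 H2. apply (le_eq p); auto. apply le_rank in H1; apply le_rank in H2; lia. Qed.

Lemma le_trans p x y z : le p x y -> le p y z -> le p x z.
Proof.
  unfold le; intros. pose proof (d_tri p x z). pose proof (d_tri x y z). lia.
Qed.

Lemma le_between p u w v : le p u v -> d u w + d w v = d u v -> le p u w /\ le p w v.
Proof.
  unfold le; intros. pose proof (d_tri p u w). pose proof (d_tri p w v). split; lia.
Qed.

Lemma le_lt p x y : le p x y -> x <> y -> d p x < d p y.
Proof. intros H N. pose proof (le_rank _ _ _ H). destruct (Nat.eq_dec (d p x) (d p y)); [|lia].
  exfalso; apply N; eapply le_eq; eauto. Qed.

Lemma le_up p x y : le p x y -> x <> y ->
  exists w, adj x w /\ le p x w /\ le p w y /\ d p w = S (d p x).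
Proof.
  intros H N. destruct (d x y) eqn:E. { exfalso; apply N, d_eq0; auto. }
  destruct (d_step _ _ _ E) as [w [Aw Dw]].
  assert (B : d x w + d w y = d x y) by (rewrite (d_adj _ _ Aw); lia).
  destruct (le_between p x w y H B) as [H1 H2]. exists w; repeat split; auto.
  unfold le in H1; rewrite (d_adj _ _ Aw) in H1; lia.
Qed.

Lemma le_down p x y : le p x y -> x <> y ->
  exists w, adj w y /\ le p x w /\ le p w y /\ d p y = S (d p w).
Proof.
  intros H N. destruct (d y x) eqn:E. { exfalso; apply N, eq_sym, d_eq0; auto. }
  destruct (d_step _ _ _ E) as [w [Aw Dw]].
  assert (B : d x w + d w y = d x y).
  { rewrite (d_sym x w), (d_sym x y), (d_sym w y), (d_adj _ _ Aw); lia. }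
  destruct (le_between p x w y H B) as [H1 H2]. exists w; repeat split; auto.
  unfold le in H2; rewrite (d_sym w y), (d_adj _ _ Aw) in H2; lia.
Qed.

Lemma le_base p m x c : le p m x -> le m c x -> le p m c /\ le p c x.
Proof.
  unfold le; intros. pose proof (d_tri p m c). pose proof (d_tri p c x). split; lia.
Qed.

Lemma le_base2 p m x q : le p m x -> le p x q -> le m x q.
Proof.
  unfold le; intros. pose proof (d_tri m x q). pose proof (d_tri p m q). pose proof (d_tri p x q). lia.
Qed.



Hypothesis htri : forall u, triangle_cond adj u.
Hypothesis hquad : forall u, quadrangle_cond adj u.
Hypothesis hK4 : ~ has_induced_K4minus adj.
Hypothesis hK33 : ~ has_isometric_K33minus adj.

Lemma neq_rank p x y : d p x <> d p y -> x <> y.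
Proof. intros H E; subst; auto. Qed.

Lemma L0 p u x y : le p x u -> le p y u -> adj x y -> d p x = d p y -> False.
Proof.
  intros Hx Hy A E.
  assert (Nxy : x <> y) by (intro; subst; eapply hirr; eauto).
  assert (T : exists t, adj t x /\ adj t y /\ S (d p t) = d p x).
  { destruct (d p x) as [|[|k]] eqn:Ex.
    - exfalso. apply Nxy. apply d_eq0 in Ex. assert (d p y = 0) by lia. apply d_eq0 in H. congruence.
    - exists p. pose proof Ex as Ey; rewrite E in Ey.
      split; [apply d_one|split;[apply d_one|]]; auto; rewrite d_refl; auto.
    - destruct (htri p x y A) as [t [H1 [H2 H3]]]; [lia|lia|]. exists t; repeat split; auto; lia. }
  destruct T as [t [Tx [Ty Tr]]].
  assert (Eu : d u x = d u y).
  { rewrite (d_sym u x), (d_sym u y). unfold le in *. lia. }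
  assert (Sx : exists s, adj s x /\ adj s y /\ S (d u s) = d u x).
  { destruct (d u x) as [|[|k]] eqn:Ex.
    - exfalso. apply Nxy. apply d_eq0 in Ex. assert (d u y = 0) by lia. apply d_eq0 in H. congruence.
    - exists u. pose proof Ex as Ey; rewrite Eu in Ey.
      split; [apply d_one|split;[apply d_one|]]; auto; rewrite d_refl; auto.
    - destruct (htri u x y A) as [s [H1 [H2 H3]]]; [lia|lia|]. exists s; repeat split; auto; lia. }
  destruct Sx as [s [Sx' [Sy Sr]]].
  assert (Rs : d p s >= S (d p x)).
  { pose proof (d_tri p s u). unfold le in Hx. rewrite (d_sym u x) in Sr. rewrite (d_sym u s) in Sr. lia. }
  apply hK4. exists x, y, t, s.
  assert (Rt : d p t < d p x) by lia.
  repeat split; auto; try (apply neq_rank with p; lia).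
  intro At. pose proof (d_lip p _ _ (hsym _ _ At)). lia.
Qed.

Definition cov p a x := le p a x /\ d p x = S (d p a).

Lemma cov_d p a x : cov p a x -> d a x = 1.
Proof. intros [H1 H2]. unfold le in H1. lia. Qed.

Lemma two_covers_dist p a b x : cov p a x -> cov p b x -> a <> b -> d a b = 2.
Proof.
  intros Ha Hb N.
  assert (d a b <= 2).
  { pose proof (d_tri a x b). rewrite (cov_d _ _ _ Ha), (d_sym x b), (cov_d _ _ _ Hb) in H. lia. }
  destruct (d a b) as [|[|[|k]]] eqn:E; try lia.
  - exfalso; apply N, d_eq0; auto.
  - exfalso. apply (L0 p x a b); [apply Ha|apply Hb|apply d_one; auto|]. destruct Ha, Hb; lia.
Qed.

Lemma L1 p a b x : cov p a x -> cov p b x -> a <> b -> exists c, cov p c a /\ cov p c b.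
Proof.
  intros Ha Hb N. pose proof (two_covers_dist _ _ _ _ Ha Hb N) as D2.
  assert (Eab : d p a = d p b) by (destruct Ha, Hb; lia).
  destruct (d p a) as [|[|k]] eqn:Ea.
  - exfalso. apply N. apply d_eq0 in Ea. assert (d p b = 0) by lia. apply d_eq0 in H. congruence.
  - exists p. unfold cov. rewrite d_refl. repeat split; try apply le_bot; lia.
  - destruct (hquad p a b x) as [c [H1 [H2 H3]]].
    + apply d_one, (cov_d p); auto.
    + apply d_one, (cov_d p); auto.
    + auto.
    + lia.
    + lia.
    + destruct Ha; lia.
    + exists c. unfold cov, le. rewrite (d_adj _ _ H1), (d_adj _ _ H2). lia.
Qed.

Lemma cov_le_d p a b : le p a b -> d a b = d p b - d p a.
Proof. apply le_dist. Qed.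

Lemma L1u p a b x c c' : cov p a x -> cov p b x -> a <> b ->
  cov p c a -> cov p c b -> cov p c' a -> cov p c' b -> c = c'.
Proof.
  intros Ha Hb N Hca Hcb Hc'a Hc'b.
  apply NNPP; intro Ncc.
  destruct (L1 p c c' a Hca Hc'a Ncc) as [e [Hec Hec']].
  pose proof (two_covers_dist _ _ _ _ Hca Hc'a Ncc) as Dcc.
  pose proof (two_covers_dist _ _ _ _ Ha Hb N) as Dab.
  destruct Ha as [Ha1 Ha2], Hb as [Hb1 Hb2], Hca as [Hca1 Hca2], Hcb as [Hcb1 Hcb2],
    Hc'a as [Hc'a1 Hc'a2], Hc'b as [Hc'b1 Hc'b2], Hec as [Hec1 Hec2], Hec' as [Hec'1 Hec'2].
  apply hK33. exists c, c', x, a, b, e.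
  pose proof (le_trans p c a x Hca1 Ha1) as Hcx.
  pose proof (le_trans p c' a x Hc'a1 Ha1) as Hc'x.
  pose proof (le_trans p e c a Hec1 Hca1) as Hea.
  pose proof (le_trans p e c b Hec1 Hcb1) as Heb.
  pose proof (le_trans p e a x Hea Ha1) as Hex.
  unfold le in Hcx, Hc'x, Hea, Heb, Hex, Ha1, Hb1, Hca1, Hcb1, Hc'a1, Hc'b1, Hec1, Hec'1.
  repeat split; [ lia | lia | lia | lia | rewrite d_sym; lia | rewrite d_sym; lia | lia | lia
   | rewrite d_sym; lia | lia | lia | rewrite d_sym; lia | rewrite d_sym; lia | rewrite d_sym; lia
   | rewrite d_sym; lia ].
Qed.

Lemma L2 p m x y u : cov p m x -> cov p m y -> x <> y -> le p x u -> le p y u ->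
  exists z, cov p x z /\ cov p y z /\ le p z u.
Proof.
  intros Hx Hy N Hxu Hyu.
  assert (Exy : d p x = d p y) by (destruct Hx, Hy; lia).
  assert (D2 : d x y = 2).
  { assert (d x y <= 2).
    { pose proof (d_tri x m y). rewrite (d_sym x m), (cov_d _ _ _ Hx), (cov_d _ _ _ Hy) in H. lia. }
    destruct (d x y) as [|[|[|k]]] eqn:E; try lia.
    - exfalso; apply N, d_eq0; auto.
    - exfalso. apply (L0 p u x y Hxu Hyu); auto. apply d_one; auto. }
  assert (Eux : d u x = d p u - d p x) by (rewrite d_sym; apply le_dist; auto).
  assert (Euy : d u y = d p u - d p y) by (rewrite d_sym; apply le_dist; auto).
  assert (Hmu : le p m u) by (eapply le_trans; [apply Hx|auto]).
  assert (Eum : d u m = d p u - d p m) by (rewrite d_sym; apply le_dist; auto).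
  pose proof (le_rank _ _ _ Hxu) as Rxu.
  destruct (Nat.eq_dec (d p u) (d p x)) as [E0|E0].
  { exfalso. apply N. pose proof (le_eq _ _ _ Hxu (eq_sym E0)). pose proof (le_eq _ _ _ Hyu ltac:(lia)). congruence. }
  destruct (Nat.eq_dec (d p u) (S (d p x))) as [E1|E1].
  { exists u. unfold cov. repeat split; auto; try apply le_refl; lia. }
  destruct (hquad u x y m) as [z [Zx [Zy Zr]]].
  - apply d_one; rewrite d_sym; apply (cov_d p); auto.
  - apply d_one; rewrite d_sym; apply (cov_d p); auto.
  - auto.
  - destruct Hx; lia.
  - lia.
  - destruct Hx; lia.
  - assert (Rz1 : d p z <= S (d p x)) by (apply d_lip; auto).
    pose proof (d_tri p z u). rewrite (d_sym z u) in H.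
    exists z. unfold cov, le. rewrite (d_adj _ _ (hsym _ _ Zx)), (d_adj _ _ (hsym _ _ Zy)).
    repeat split; try lia.
    rewrite (d_sym z u). lia.
Qed.

Lemma J p q : forall n m x y, le p m x -> le p m y -> le p x q -> le p y q ->
  (d p x - d p m) + (d p y - d p m) <= n ->
  exists j, le p x j /\ le p y j /\ le p j q /\
    (forall u, le p u q -> le p x u -> le p y u -> le p j u) /\ d p j + d p m <= d p x + d p y.
Proof.
  intro n; induction n as [n IH] using lt_wf_ind.
  intros m x y Hmx Hmy Hxq Hyq Hn.
  destruct (classic (x = m)) as [Exm|Nxm].
  { subst x. exists y. repeat split; auto; try apply le_refl; lia. }
  destruct (classic (y = m)) as [Eym|Nym].
  { subst y. exists x. repeat split; auto; try apply le_refl; try lia. }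
  pose proof (le_lt _ _ _ Hmx (not_eq_sym Nxm)) as Lx.
  pose proof (le_lt _ _ _ Hmy (not_eq_sym Nym)) as Ly.
  destruct (le_up p m x Hmx (not_eq_sym Nxm)) as [x1 [Ax1 [Hmx1 [Hx1x Rx1]]]].
  destruct (le_up p m y Hmy (not_eq_sym Nym)) as [y1 [Ay1 [Hmy1 [Hy1y Ry1]]]].
  destruct (classic (x1 = y1)) as [E1|N1].
  { subst y1. destruct (IH (n - 2) ltac:(lia) x1 x y Hx1x Hy1y Hxq Hyq ltac:(lia)) as
      [j [H1 [H2 [H3 [H4 H5]]]]].
    exists j; repeat split; auto; lia. }
  assert (Hx1q : le p x1 q) by (eapply le_trans; eauto).
  assert (Hy1q : le p y1 q) by (eapply le_trans; eauto).
  destruct (L2 p m x1 y1 q (conj Hmx1 Rx1) (conj Hmy1 Ry1) N1 Hx1q Hy1q) as [z [[Hx1z Rz] [[Hy1z _] Hzq]]].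
  assert (Zl : forall u, le p u q -> le p x1 u -> le p y1 u -> le p z u).
  { intros u Hu H1 H2.
    destruct (L2 p m x1 y1 u (conj Hmx1 Rx1) (conj Hmy1 Ry1) N1 H1 H2) as [z' [Cz'1 [Cz'2 Hz'u]]].
    destruct (classic (z = z')) as [Ez|Nz]; [subst; auto|].
    exfalso. apply N1.
    assert (Hz'q : le p z' q) by (eapply le_trans; eauto).
    destruct (L2 p x1 z z' q (conj Hx1z Rz) Cz'1 Nz Hzq Hz'q) as [w [Cw1 [Cw2 _]]].
    eapply (L1u p z z' w x1 y1); eauto; split; auto; destruct Cz'1, Cz'2; lia. }
  destruct (IH (d p x - d p x1 + (d p z - d p x1)) ltac:(lia) x1 x z Hx1x Hx1z Hxq Hzq ltac:(lia))
    as [j1 [Hxj1 [Hzj1 [Hj1q [Lj1 Rj1]]]]].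
  assert (Hy1j1 : le p y1 j1) by (eapply le_trans; eauto).
  pose proof (le_rank _ _ _ Hy1y).
  destruct (IH (d p j1 - d p y1 + (d p y - d p y1)) ltac:(lia) y1 j1 y Hy1j1 Hy1y Hj1q Hyq ltac:(lia))
    as [j [Hj1j [Hyj [Hjq [Lj Rj]]]]].
  exists j. split; [|split; [|split; [|split]]]; auto.
  - exact (le_trans _ _ _ _ Hxj1 Hj1j).
  - intros u Hu H1 H2. apply Lj; auto. apply Lj1; auto. apply Zl; auto.
    + exact (le_trans _ _ _ _ Hx1x H1).
    + exact (le_trans _ _ _ _ Hy1y H2).
  - lia.
Qed.

Lemma MJ p : forall n j x y, le p x j -> le p y j -> (d p j - d p x) + (d p j - d p y) <= n ->
  exists c, le p c x /\ le p c y /\ d p x + d p y <= d p c + d p j.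
Proof.
  intro n; induction n as [n IH] using lt_wf_ind.
  intros j x y Hxj Hyj Hn.
  destruct (classic (x = j)) as [Exj|Nxj].
  { subst x. exists y. repeat split; auto; try apply le_refl; lia. }
  destruct (classic (y = j)) as [Eyj|Nyj].
  { subst y. exists x. repeat split; auto; try apply le_refl; lia. }
  pose proof (le_lt _ _ _ Hxj Nxj) as Lx.
  pose proof (le_lt _ _ _ Hyj Nyj) as Ly.
  destruct (le_down p x j Hxj Nxj) as [x1 [Ax1 [Hxx1 [Hx1j Rx1]]]].
  destruct (le_down p y j Hyj Nyj) as [y1 [Ay1 [Hyy1 [Hy1j Ry1]]]].
  pose proof (le_rank _ _ _ Hxx1). pose proof (le_rank _ _ _ Hyy1).
  destruct (classic (x1 = y1)) as [E1|N1].
  { subst y1. destruct (IH (n - 2) ltac:(lia) x1 x y Hxx1 Hyy1 ltac:(lia)) as [c [H1 [H2 H3]]].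
    exists c; repeat split; auto; lia. }
  destruct (L1 p x1 y1 j (conj Hx1j Rx1) (conj Hy1j Ry1) N1) as [z [[Hzx1 Rz1] [Hzy1 Rz2]]].
  destruct (IH (d p x1 - d p x + (d p x1 - d p z)) ltac:(lia) x1 x z Hxx1 Hzx1 ltac:(lia))
    as [m1 [Hm1x [Hm1z Rm1]]].
  pose proof (le_trans _ _ _ _ Hm1z Hzy1) as Hm1y1.
  pose proof (le_rank _ _ _ Hm1z).
  destruct (IH (d p y1 - d p m1 + (d p y1 - d p y)) ltac:(lia) y1 m1 y Hm1y1 Hyy1 ltac:(lia))
    as [c [Hcm1 [Hcy Rc]]].
  exists c; split; [|split]; auto.
  - exact (le_trans _ _ _ _ Hcm1 Hm1x).
  - lia.
Qed.

Lemma join_ex p q x y : le p x q -> le p y q -> exists j, le p x j /\ le p y j /\ le p j q /\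
    (forall u, le p u q -> le p x u -> le p y u -> le p j u) /\ d p j <= d p x + d p y.
Proof.
  intros Hx Hy.
  destruct (J p q _ p x y (le_bot p x) (le_bot p y) Hx Hy (le_n _)) as [j [H1 [H2 [H3 [H4 H5]]]]].
  exists j; repeat split; auto. rewrite d_refl in H5; lia.
Qed.

Lemma meet_ex p q x y : le p x q -> le p y q -> exists m, le p m x /\ le p m y /\
    (forall c, le p c x -> le p c y -> le p c m).
Proof.
  intros Hx Hy.
  destruct (bounded_max (fun k => exists c, le p c x /\ le p c y /\ d p c = k) (d p x))
    as [k [[c [Hcx [Hcy Hck]]] Hmax]].
  - exists 0. exists p. repeat split; try apply le_bot. apply d_refl.
  - intros k [c [H1 [H2 H3]]]. subst. apply le_rank; auto.
  - exists c; repeat split; auto. intros c' H1 H2.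
    assert (Hcq : le p c q) by (eapply le_trans; eauto).
    assert (Hc'q : le p c' q) by (eapply le_trans; eauto).
    destruct (join_ex p q c c' Hcq Hc'q) as [j [Hcj [Hc'j [Hjq [Lj _]]]]].
    assert (Hjx : le p j x) by (apply Lj; auto).
    assert (Hjy : le p j y) by (apply Lj; auto).
    assert (d p j <= k) by (apply Hmax; eauto).
    pose proof (le_rank _ _ _ Hcj).
    assert (c = j) by (apply (le_eq p); auto; lia). subst; auto.
Qed.

Lemma rankf p q x y m j : le p x q -> le p y q -> le p m x -> le p m y ->
  (forall c, le p c x -> le p c y -> le p c m) ->
  le p x j -> le p y j -> le p j q ->
  (forall u, le p u q -> le p x u -> le p y u -> le p j u) ->
  d p j + d p m = d p x + d p y.
Proof.
  intros Hx Hy Hmx Hmy Lm Hxj Hyj Hjq Lj.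
  destruct (J p q _ m x y Hmx Hmy Hx Hy (le_n _)) as [j0 [H1 [H2 [H3 [H4 H5]]]]].
  assert (j0 = j) by (apply (le_antisym p); auto).
  subst j0.
  destruct (MJ p _ j x y Hxj Hyj (le_n _)) as [c [Hcx [Hcy Hc]]].
  pose proof (le_rank _ _ _ (Lm c Hcx Hcy)). lia.
Qed.

Definition meetp p x y := forall c, le p c x -> le p c y -> c = p.

Lemma main_case p q x y
  (IHq : forall p' q', d p' q' < d p q -> forall x y, le p' x q' -> le p' y q' -> meetp p' x y ->
     d x y = d p' x + d p' y) :
  le p x q -> le p y q -> meetp p x y -> d p q = d p x + d p y -> 1 <= d p x -> 2 <= d p y ->
  d p x + d p y <= d x y.
Proof.
  intros Hx Hy Mxy Dq Ha Hb.
  assert (small : forall x' y', le p x' q -> le p y' q -> meetp p x' y' -> d p x' + d p y' < d p q ->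
            d x' y' = d p x' + d p y').
  { intros x' y' H1 H2 M Lt. destruct (join_ex p q x' y' H1 H2) as [j [Hxj [Hyj [Hjq [_ Rj]]]]].
    apply (IHq p j); auto. lia. }
  assert (Nxp : p <> x) by (apply neq_rank with p; rewrite d_refl; lia).
  destruct (le_down p p x (le_bot p x) Nxp) as [x1 [Ax1 [_ [Hx1x Rx1]]]].
  assert (Hx1q : le p x1 q) by exact (le_trans _ _ _ _ Hx1x Hx).
  assert (Dx1y : d x1 y = d p x1 + d p y).
  { apply small; auto; [|lia]. intros c H1 H2. apply Mxy; auto. exact (le_trans _ _ _ _ H1 Hx1x). }
  assert (Dxx1 : d x x1 = 1) by (apply d_adj; auto).
  pose proof (d_tri x1 x y) as T1. rewrite (d_sym x1 x), Dxx1 in T1.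
  destruct (le_lt_dec (d p x + d p y) (d x y)) as [OK|Lt]; [exact OK|exfalso].
  destruct (Nat.eq_dec (d x y) (d p x + d p y - 2)) as [E2|E2].
  -
    assert (Hxy1 : le y x x1) by (unfold le; rewrite (d_sym y x), (d_sym y x1); lia).
    assert (Hpy1 : le y p x1) by (unfold le; rewrite (d_sym y p), (d_sym y x1), (d_sym p x1) in *; 
       pose proof (le_dist _ _ _ Hx1x); lia).
    destruct (meet_ex y x1 x p Hxy1 Hpy1) as [c [Hcx [Hcp Lc]]].
    destruct (join_ex y x1 x p Hxy1 Hpy1) as [jj [Hxjj [Hpjj [Hjjx1 [Ljj _]]]]].
    pose proof (rankf y x1 x p c jj Hxy1 Hpy1 Hcx Hcp Lc Hxjj Hpjj Hjjx1 Ljj) as RF.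
    assert (Njj : x <> jj).
    { intro E; subst jj. unfold le in Hpjj. rewrite (d_sym y p), (d_sym y x) in Hpjj. lia. }
    pose proof (le_lt _ _ _ Hxjj Njj). pose proof (le_rank _ _ _ Hjjx1).
    assert (Dyx1 : d y x1 = d p x + d p y - 1) by (rewrite d_sym; lia).
    assert (Dyx : d y x = d p x + d p y - 2) by (rewrite d_sym; lia).
    assert (Dyp : d y p = d p y) by apply d_sym.
    unfold le in Hcx, Hcp.
    assert (Hc1 : le p c x) by (unfold le; rewrite (d_sym p c); lia).
    assert (Hc2 : le p c y) by (unfold le; rewrite (d_sym p c), (d_sym c y); lia).
    pose proof (Mxy c Hc1 Hc2) as Ec. subst c. rewrite d_refl in *. lia.
  -
    assert (En : d x y = d p x + d p y - 1) by lia.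
    destruct (htri y x1 x Ax1) as [t [At1 [Atx Rt]]].
    { rewrite (d_sym y x1), (d_sym y x). lia. }
    { rewrite (d_sym y x1). lia. }
    rewrite (d_sym y x1) in Rt.
    assert (Dt1 : d x1 t = 1) by (apply d_adj; auto).
    assert (Ht : le x1 t y) by (unfold le; rewrite (d_sym t y); lia).
    assert (Hp : le x1 p y) by (unfold le; rewrite (d_sym x1 p); pose proof (le_dist _ _ _ Hx1x); lia).
    destruct (meet_ex x1 y t p Ht Hp) as [mm [Hmt [Hmp Lm]]].
    destruct (join_ex x1 y t p Ht Hp) as [g [Htg [Hpg [Hgy [Lg _]]]]].
    pose proof (rankf x1 y t p mm g Ht Hp Hmt Hmp Lm Htg Hpg Hgy Lg) as RF.
    assert (Dpt : d p t >= d p x - 1).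
    { pose proof (d_tri p t x). rewrite (d_adj _ _ Atx) in H. lia. }
    assert (Rm : d x1 mm = 0).
    { pose proof (le_rank _ _ _ Hmt). destruct (Nat.eq_dec (d x1 mm) 0) as [|Nm]; auto.
      exfalso. assert (mm = t) by (apply (le_eq x1); auto; lia). subst mm.
      unfold le in Hmp. rewrite (d_sym x1 p), (d_sym t p) in Hmp. pose proof (le_dist _ _ _ Hx1x). lia. }
    unfold le in Htg, Hpg, Hgy.
    rewrite (d_sym x1 p) in Hpg, RF. pose proof (le_dist _ _ _ Hx1x) as Lx1.
    assert (Dxg : d x g <= d p x).
    { pose proof (d_tri x t g). rewrite (d_sym x t), (d_adj _ _ Atx) in H. lia. }
    assert (Hgy' : le p g y) by (unfold le; lia).
    assert (Hgq : le p g q) by exact (le_trans _ _ _ _ Hgy' Hy).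
    assert (Mxg : meetp p x g).
    { intros c H1 H2. apply Mxy; auto. exact (le_trans _ _ _ _ H2 Hgy'). }
    pose proof (small x g Hx Hgq Mxg ltac:(lia)). lia.
Qed.

Lemma Iso : forall D p q, d p q <= D -> forall x y, le p x q -> le p y q -> meetp p x y ->
  d x y = d p x + d p y.
Proof.
  intro D; induction D as [D IH] using lt_wf_ind.
  intros p q HD x y Hx Hy M.
  assert (IHq : forall p' q', d p' q' < d p q -> forall x y, le p' x q' -> le p' y q' -> meetp p' x y ->
     d x y = d p' x + d p' y).
  { intros p' q' Lt. apply (IH (d p' q')); [lia|lia]. }
  pose proof (d_tri x p y) as T. rewrite (d_sym x p) in T.
  destruct (join_ex p q x y Hx Hy) as [j [Hxj [Hyj [Hjq [Lj Rj]]]]].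
  destruct (classic (j = q)) as [Ej|Nj].
  2:{ apply (IHq p j); auto. apply le_lt; auto. }
  subst j.
  destruct (MJ p _ q x y Hx Hy (le_n _)) as [c [Hcx [Hcy Rc]]].
  rewrite (M c Hcx Hcy), d_refl in Rc.
  assert (Dq : d p q = d p x + d p y) by lia.
  destruct (d p x) as [|a] eqn:Ea.
  { apply d_eq0 in Ea. subst x. simpl. reflexivity. }
  destruct (d p y) as [|b] eqn:Eb.
  { apply d_eq0 in Eb. subst y. rewrite d_sym, Ea. lia. }
  apply Nat.le_antisymm; [lia|].
  destruct a as [|a]; destruct b as [|b].
  - destruct (d x y) as [|[|k]] eqn:E; try lia.
    + apply d_eq0 in E. subst y. pose proof (M x (le_refl _ _) (le_refl _ _)). subst x.
      rewrite d_refl in Ea; discriminate.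
    + exfalso. apply (L0 p q x y Hx Hy); [apply d_one; auto|lia].
  - assert (d p x + d p y <= d x y) by (apply (main_case p q x y IHq); auto; lia). lia.
  - assert (d p y + d p x <= d y x).
    { apply (main_case p q y x IHq); auto; try lia. intros c0 H1 H2; apply M; auto. }
    rewrite (d_sym x y). lia.
  - assert (d p x + d p y <= d x y) by (apply (main_case p q x y IHq); auto; lia). lia.
Qed.

Section Fwd.
Variables p q : V.
Let Sq := interval adj p q.
Let R := bp_le adj p.

Lemma S_le x : Sq x <-> le p x q. Proof. reflexivity. Qed.
Lemma R_le x y : R x y <-> le p x y. Proof. reflexivity. Qed.

Lemma meet_ex' x y : Sq x -> Sq y -> exists m, is_meet Sq R x y m.
Proof.
  intros Hx Hy. destruct (meet_ex p q x y Hx Hy) as [m [H1 [H2 H3]]].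
  exists m. repeat split; auto. exact (le_trans _ _ _ _ H1 Hx).
  intros u _ Hu1 Hu2; apply H3; auto.
Qed.

Lemma join_ex' x y : Sq x -> Sq y -> exists j, is_join Sq R x y j.
Proof.
  intros Hx Hy. destruct (join_ex p q x y Hx Hy) as [j [H1 [H2 [H3 [H4 _]]]]].
  exists j. repeat split; auto.
Qed.

Lemma rk x y m j : Sq x -> Sq y -> is_meet Sq R x y m -> is_join Sq R x y j ->
  d p j + d p m = d p x + d p y.
Proof.
  intros Hx Hy [Sm [Hmx [Hmy Lm]]] [Sj [Hxj [Hyj Lj]]].
  apply (rankf p q x y m j); auto.
  intros c H1 H2. apply Lm; auto. exact (le_trans _ _ _ _ H1 Hx).
Qed.

Lemma fwd_lattice : is_modular_lattice Sq R.
Proof.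
  split; [split|].
  - split; [|split].
    + intros x _; apply le_refl.
    + intros x y _ _ H1 H2; exact (le_antisym _ _ _ H1 H2).
    + intros x y z _ _ _ H1 H2; exact (le_trans _ _ _ _ H1 H2).
  - intros x y Hx Hy; split; [apply join_ex'|apply meet_ex']; auto.
  - intros x y z Hx Hy Hz Hxz a b c e Ha Hb Hc He.
    pose proof Ha as [Sa [Hay [Haz La]]].
    pose proof Hb as [Sb [Hxb [Hab Lb]]].
    pose proof Hc as [Sc [Hxc [Hyc Lc]]].
    pose proof He as [Se [Hec [Hez Le]]].
    assert (Hbe : R b e).
    { apply Le; [exact Sb| |].
      - apply Lb; [exact Sc|exact Hxc|exact (le_trans _ _ _ _ Hay Hyc)].
      - apply Lb; [exact Hz|exact Hxz|exact Haz]. }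
    destruct (meet_ex' x a Hx Sa) as [m1 Hm1].
    destruct (meet_ex' x y Hx Hy) as [m3 Hm3].
    destruct (join_ex' y z Hy Hz) as [j2 Hj2].
    destruct (join_ex' c z Sc Hz) as [j4 Hj4].
    pose proof (rk _ _ _ _ Hx Sa Hm1 Hb) as R1.
    pose proof (rk _ _ _ _ Hy Hz Ha Hj2) as R2.
    pose proof (rk _ _ _ _ Hx Hy Hm3 Hc) as R3.
    pose proof (rk _ _ _ _ Sc Hz He Hj4) as R4.
    assert (E13 : m1 = m3).
    { destruct Hm1 as [S1 [H1x [H1a L1]]], Hm3 as [S3 [H3x [H3y L3]]].
      apply (le_antisym p).
      - apply L3; auto. exact (le_trans _ _ _ _ H1a Hay).
      - apply L1; auto. apply La; auto. exact (le_trans _ _ _ _ H3x Hxz). }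
    assert (E24 : j2 = j4).
    { destruct Hj2 as [S2 [H2y [H2z L2]]], Hj4 as [S4 [H4c [H4z L4]]].
      apply (le_antisym p).
      - apply L2; auto. exact (le_trans _ _ _ _ Hyc H4c).
      - apply L4; auto. apply Lc; auto. exact (le_trans _ _ _ _ Hxz H2z). }
    subst m3 j4.
    apply (le_eq p); auto. lia.
Qed.

Lemma fwd_cover : is_covering_graph_on adj Sq R.
Proof.
  intros x y Hx Hy. split.
  - intros A. pose proof (d_lip p _ _ A) as L1. pose proof (d_lip p _ _ (hsym _ _ A)) as L2.
    assert (Nxy : x <> y) by (intro; subst; eapply hirr; eauto).
    destruct (Nat.eq_dec (d p x) (d p y)) as [E|E].
    { exfalso. exact (L0 p q x y Hx Hy A E). }
    assert (Cov : forall a b, Sq a -> Sq b -> adj a b -> d p b = S (d p a) -> covers Sq R a b).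
    { intros a b Ha Hb Aab Rab. assert (Hab : le p a b) by (unfold le; rewrite (d_adj _ _ Aab); lia).
      repeat split; auto.
      - intro; subst; eapply hirr; eauto.
      - intros z _ H1 H2. pose proof (le_rank _ _ _ H1). pose proof (le_rank _ _ _ H2).
        destruct (Nat.eq_dec (d p z) (d p a)).
        + left. symmetry. apply (le_eq p); auto.
        + right. apply (le_eq p); auto. lia. }
    destruct (Nat.eq_dec (d p y) (S (d p x))).
    + left; apply Cov; auto.
    + right; apply Cov; auto. lia.
  - assert (Cv : forall a b, covers Sq R a b -> adj a b).
    { intros a b [Ha [Hb [Hab [Nab Lab]]]].
      destruct (le_up p a b Hab Nab) as [w [Aw [Haw [Hwb _]]]].
      destruct (Lab w (le_trans _ _ _ _ Hwb Hb) Haw Hwb) as [E|E]; subst.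
      - exfalso; eapply hirr; eauto.
      - auto. }
    intros [C|C]; [apply Cv; auto|apply hsym, Cv; auto].
Qed.

End Fwd.

Lemma walk_mono (R1 R2 : V -> V -> Prop) n x y : (forall a b, R1 a b -> R2 a b) ->
  walk R1 n x y -> walk R2 n x y.
Proof. intros H W; induction W; econstructor; eauto. Qed.

Lemma walk_app_gen (R1 : V -> V -> Prop) n m x y z : walk R1 n x y -> walk R1 m y z -> walk R1 (n + m) x z.
Proof. induction 1; intros; simpl; auto. econstructor; eauto. Qed.

Lemma walk_rev_gen (R1 : V -> V -> Prop) (Rs : forall a b, R1 a b -> R1 b a) n x y :
  walk R1 n x y -> walk R1 n y x.
Proof.
  induction 1. constructor.
  replace (S n) with (n + 1) by lia. eapply walk_app_gen; eauto.
  econstructor; eauto. constructor.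
Qed.

Lemma down_walk p q : forall n u v, d u v = n -> le p u v -> le p v q ->
  walk (induced adj (interval adj p q)) n u v.
Proof.
  induction n; intros u v E Huv Hvq.
  - apply d_eq0 in E; subst; constructor.
  - destruct (d_step _ _ _ E) as [w [Aw Dw]].
    assert (B : d u w + d w v = d u v) by (rewrite (d_adj _ _ Aw); lia).
    destruct (le_between p u w v Huv B) as [H1 H2].
    apply walkS with w.
    + split; [|split]; auto.
      * exact (le_trans _ _ _ _ Huv Hvq).
      * exact (le_trans _ _ _ _ H2 Hvq).
    + apply IHn; auto.
Qed.

Lemma fwd_iso p q : isometric_on adj (interval adj p q).
Proof.
  intros x y Hx Hy.
  destruct (meet_ex p q x y Hx Hy) as [m [Hmx [Hmy Lm]]].
  assert (Mm : meetp m x y).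
  { intros c H1 H2. destruct (le_base p m x c Hmx H1) as [Hmc Hcx].
    destruct (le_base p m y c Hmy H2) as [_ Hcy].
    apply (le_antisym p); auto. }
  pose proof (Iso (d m q) m q (le_n _) x y (le_base2 _ _ _ _ Hmx Hx) (le_base2 _ _ _ _ Hmy Hy) Mm) as Dxy.
  split.
  - rewrite Dxy. apply walk_app_gen with m.
    + apply walk_rev_gen; [intros a b [Ha [Hb Ab]]; repeat split; auto|].
      apply (down_walk p q); auto.
    + apply (down_walk p q); auto.
  - intros k W. apply d_le. eapply walk_mono; [|exact W]. intros a b [_ [_ Ab]]; auto.
Qed.

Section Bwd.
Hypothesis Hlat : forall p q : V,
     is_modular_lattice (interval adj p q) (bp_le adj p) /\
     is_covering_graph_on adj (interval adj p q) (bp_le adj p) /\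
     isometric_on adj (interval adj p q).

Lemma bwd_K4 : ~ has_induced_K4minus adj.
Proof.
  intros [a [b [c [e [Nab [Nac [Nae [Nbc [Nbe [Nce [Aab [Aac [Aae [Abc [Abe Nadj]]]]]]]]]]]]]]].
  assert (Dce : d c e = 2).
  { assert (d c e <= 2).
    { apply d_le. apply walkS with a; [apply hsym; auto|]. apply walkS with e; auto. constructor. }
    destruct (d c e) as [|[|[|k]]] eqn:E; try lia.
    - exfalso; apply Nce, d_eq0; auto.
    - exfalso; apply Nadj, d_one; auto. }
  assert (Dca : d c a = 1) by (apply d_adj, hsym; auto).
  assert (Dcb : d c b = 1) by (apply d_adj, hsym; auto).
  assert (Dae : d a e = 1) by (apply d_adj; auto).
  assert (Dbe : d b e = 1) by (apply d_adj; auto).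
  assert (Dab : d a b = 1) by (apply d_adj; auto).
  destruct (Hlat c e) as [_ [Hcov _]].
  assert (Sa : interval adj c e a) by (unfold interval; lia).
  assert (Sb : interval adj c e b) by (unfold interval; lia).
  destruct (proj1 (Hcov a b Sa Sb) Aab) as [[_ [_ [H _]]]|[_ [_ [H _]]]];
    unfold bp_le, interval in H.
  - lia.
  - rewrite (d_sym b a) in H. lia.
Qed.

Lemma bwd_K33 : ~ has_isometric_K33minus adj.
Proof.
  intros [a1 [a2 [a3 [b1 [b2 [b3 [D12 [D13 [D23 [E12 [E13 [E23 [F11 [F12 [F13 [F21 [F22 [F23
    [F31 [F32 F33]]]]]]]]]]]]]]]]]]]].
  destruct (Hlat a3 b3) as [[[_ Hex] _] _].
  assert (Sb1 : interval adj a3 b3 b1) by (unfold interval; lia).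
  assert (Sb2 : interval adj a3 b3 b2) by (unfold interval; lia).
  assert (Sa1 : interval adj a3 b3 a1) by (unfold interval; rewrite (d_sym a3 a1); lia).
  assert (Sa2 : interval adj a3 b3 a2) by (unfold interval; rewrite (d_sym a3 a2); lia).
  destruct (Hex b1 b2 Sb1 Sb2) as [[j [Sj [Hb1j [Hb2j Lj]]]] _].
  assert (Ha1 : bp_le adj a3 j a1).
  { apply Lj; auto; unfold bp_le, interval; rewrite (d_sym a3 a1), (d_sym b1 a1) || rewrite (d_sym a3 a1), (d_sym b2 a1); lia. }
  assert (Ha2 : bp_le adj a3 j a2).
  { apply Lj; auto; unfold bp_le, interval; rewrite (d_sym a3 a2), (d_sym b1 a2) || rewrite (d_sym a3 a2), (d_sym b2 a2); lia. }
  unfold bp_le, interval in Ha1, Ha2, Hb1j, Hb2j.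
  rewrite (d_sym a3 a1) in Ha1. rewrite (d_sym a3 a2) in Ha2.
  destruct (Nat.eq_dec (d b1 j) 0) as [E|E].
  - apply d_eq0 in E. subst j. rewrite (d_sym b2 b1) in Hb2j. lia.
  - assert (d j a1 = 0) by lia. assert (d j a2 = 0) by lia.
    apply d_eq0 in H. apply d_eq0 in H0. subst. rewrite d_refl in D12. discriminate.
Qed.

Lemma bwd_quad_aux u z v w m : d u z = S (d u v) -> d u v = d u w -> d v w = 2 ->
  interval adj u z v -> interval adj u z w ->
  is_meet (interval adj u z) (bp_le adj u) v w m -> d m v = 1.
Proof.
  intros Dz Dvw D2 Sv Sw Hm.
  destruct (Hlat u z) as [[[_ Hex] Hmod] _].
  pose proof Hm as [Sm [Hmv [Hmw Lm]]].
  change (le u m v) in Hmv. change (le u m w) in Hmw.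
  assert (Nmv : m <> v).
  { intro; subst m. unfold le in Hmw. lia. }
  destruct (d v m) as [|[|n']] eqn:E.
  - exfalso; apply Nmv, eq_sym, d_eq0; auto.
  - rewrite d_sym; auto.
  - exfalso. destruct (d_step _ _ _ E) as [y [Ay Dy]].
    assert (B : d m y + d y v = d m v) by (rewrite (d_sym m y), (d_sym y v), (d_sym m v), (d_adj _ _ Ay); lia).
    destruct (le_between u m y v Hmv B) as [Hmy Hyv].
    assert (Nym : y <> m) by (apply d_neq; lia).
    assert (Sy : interval adj u z y) by exact (le_trans _ _ _ _ Hyv Sv).
    assert (Sz : interval adj u z z) by apply le_refl.
    destruct (Hex y w Sy Sw) as [[c Hc] _].
    pose proof Hc as [Sc [Hyc [Hwc Lc]]].
    destruct (Hex c v Sc Sv) as [_ [e He]].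
    pose proof He as [Se [Hec [Hev Le]]].
    assert (Hm' : is_meet (interval adj u z) (bp_le adj u) w v m) by (repeat split; auto).
    assert (Hb : is_join (interval adj u z) (bp_le adj u) y m y).
    { repeat split; auto. apply le_refl. }
    pose proof (Hmod y w v Sy Sw Sv Hyv m y c e Hm' Hb Hc He) as Eye.
    assert (Hcz : le u c z) by (apply Lc; auto; exact (le_trans _ _ _ _ Hyv Sv)).
    assert (Ncw : w <> c).
    { intro; subst c. apply Nym. apply (le_antisym u); auto. apply Lm; auto. }
    pose proof (le_lt _ _ _ Hwc Ncw). pose proof (le_rank _ _ _ Hcz).
    assert (c = z) by (apply (le_eq u); auto; lia). subst c.
    assert (Hve : le u v e) by (apply Le; auto; apply le_refl).
    assert (e = v) by (apply (le_antisym u); auto).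
    subst. eapply hirr; eauto.
Qed.

Lemma bwd_quad u : quadrangle_cond adj u.
Proof.
  intros v w z Avz Awz D2 H2 Dvw Dz.
  assert (Sv : interval adj u z v) by (unfold interval; rewrite (d_adj _ _ Avz); lia).
  assert (Sw : interval adj u z w) by (unfold interval; rewrite (d_adj _ _ Awz); lia).
  destruct (Hlat u z) as [[[_ Hex] _] _].
  destruct (Hex v w Sv Sw) as [_ [m Hm]].
  pose proof (bwd_quad_aux u z v w m ltac:(lia) Dvw D2 Sv Sw Hm) as Dmv.
  assert (Hm' : is_meet (interval adj u z) (bp_le adj u) w v m).
  { destruct Hm as [A [B [C Dd]]]. repeat split; auto. }
  pose proof (bwd_quad_aux u z w v m ltac:(lia) (eq_sym Dvw) ltac:(rewrite d_sym; auto) Sw Sv Hm') as Dmw.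
  exists m. split; [|split].
  - apply d_one; auto.
  - apply d_one; auto.
  - destruct Hm as [_ [Hmv _]]. unfold bp_le, interval in Hmv. lia.
Qed.

End Bwd.
End Metric.

Theorem theorem6p1 (V : Type) (adj : V -> V -> Prop)
  (hG : simple_connected_graph adj)
  (htri : forall u, triangle_cond adj u) :
  swm_graph adj <->
  (forall p q : V,
     is_modular_lattice (interval adj p q) (bp_le adj p) /\
     is_covering_graph_on adj (interval adj p q) (bp_le adj p) /\
     isometric_on adj (interval adj p q)).
Proof.
  destruct hG as [hsym [hirr hcon]].
  split.
  - intros [wm [hK4 hK33]] p q.
    assert (hquad : forall u, quadrangle_cond adj u) by (intro u; apply (wm u)).
    split; [|split].
    + eapply fwd_lattice; eauto.
    + eapply fwd_cover; eauto.
    + eapply fwd_iso; eauto.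
  - intros Hlat. split; [|split].
    + intro u. split; auto. eapply bwd_quad; eauto.
    + eapply bwd_K4; eauto.
    + eapply bwd_K33; eauto.
Qed.
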